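(* Let $\Gamma=(V,E)$ be a finite connected planar quiver, $k$ a field of characteristic $0$, and let $I\subseteq R^2$ be an ideal of $k\Gamma$ generated by paths such that $k\Gamma/I$ is complete and acyclic. Then the classes of the elements of $(\overline{\mathfrak{B}}_2\setminus\overline{\mathfrak{B}}_E)\cup\overline{\mathfrak{B}}_{\mathbb{P}}$ form a $k$-basis of $HH^1(k\Gamma/I)$.
   Context: For a path $p$, $t(p),h(p)$ are its start and end vertex; paths multiply by left-to-right concatenation (product $0$ if they do not concatenate). $R$ is the ideal generated by $E$, $\overline{x}=x+I$. $\mathscr{Q}$ is the set of residue classes of paths not in $I$; for $\overline{s}\in\mathscr{Q}$ the class of $s\notin I$, $r\parallel\overline{s}$ means $t(r)=t(s)$, $h(r)=h(s)$. $k\Gamma/I$ is complete if for any two parallel paths $p,p'$, $p\in I$ implies $p'\in I$; acyclic if every path $p\notin I$ with $t(p)=h(p)$ is a vertex. $HH^1(k\Gamma/I)$ is the space of derivations of $k\Gamma/I$ modulo inner derivations. For $r\in E$, $\overline{s}\in\mathscr{Q}$, $r\parallel\overline{s}$, $\overline{D}_{r,\overline{s}}$ is the derivation of $k\Gamma/I$ induced by the unique $k$-linear map $D_{r,\overline{s}}:k\Gamma\to k\Gamma/I$ with $D(xy)=D(x)\overline{y}+\overline{x}D(y)$, $D_{r,\overline{s}}(r)=\overline{s}$ and vanishing on other arrows and vertices. $\overline{\mathfrak{B}}_2$ is the set of all such $\overline{D}_{r,\overline{s}}$; $\overline{\mathfrak{B}}_E=\{\overline{D}_{p,\overline{p}}\mid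 p\in E\}$. A planar quiver has a fixed embedding in $\mathbb{R}^2$; its faces are the connected components of $\mathbb{R}^2\setminus\Gamma$, one of which, $f_0$, is unbounded. For a face $f$ whose boundary consists of the ordered arrows $p_1,\dots,p_s$ (arrows bordering $f$ on both sides appear twice), $\overline{D}_{\mathbbm{p}_f}=\sum_i\epsilon_i\overline{D}_{p_i,\overline{p_i}}$ with $\epsilon_i=+1$ if $p_i$ runs clockwise viewed from the interior of $f$ and $-1$ otherwise. $\overline{\mathfrak{B}}_{\mathbb{P}}=\{\overline{D}_{\mathbbm{p}_f}\mid f\neq f_0\}$. *)

(* Defs.v *)
From HB Require Import structures.
From mathcomp Require Import all_boot all_order all_algebra all_fingroup.
Set Implicit Arguments. Unset Strict Implicit. Unset Printing Implicit Defensive.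
Import GRing.Theory.
Local Open Scope ring_scope.

(* A finite quiver Gamma = (V, E) with tail t (start) and head h (end).       *)
(* A (raw) path is a pair (v, s) : V * seq E : the start vertex v and the     *)
(* list of arrows, concatenated left to right; (v, [::]) is the vertex v.     *)
Section Quiver.
Variables (V E : finType) (t h : E -> V).

Definition consec (e f : E) : bool := h e == t f.

Definition is_qpath (v : V) (s : seq E) : bool :=
  if s is e :: s' then (t e == v) && path consec e s' else true.

Definition pend (v : V) (s : seq E) : V := last v (map h s).

Definition undir_adj : rel V :=
  fun u w => [exists e, ((t e == u) && (h e == w)) || ((h e == u) && (t e == w))].
Definition quiver_connected : Prop := forall u w : V, connect undir_adj u w.

(* Planar embedding, combinatorially: a rotation system on the darts          *)
(* (e, true) (leaving t e) and (e, false) (leaving h e), i.e. a permutation   *)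
(* sigma cyclically ordering (counterclockwise) the darts around each vertex, *)
(* of genus 0 (Euler's formula).  Faces are the orbits of the face            *)
(* permutation d |-> sigma (reverse d); each such orbit is the boundary walk  *)
(* of a face, traversed clockwise (face on the right), so that the forward    *)
(* dart (e, true) lies in the orbit of f iff e runs clockwise around f.       *)
Definition dorig (d : E * bool) : V := if d.2 then t d.1 else h d.1.
Definition drev (d : E * bool) : E * bool := (d.1, ~~ d.2).

Definition rotation_system (sigma : {perm (E * bool)}) : Prop :=
  (forall d, dorig (sigma d) = dorig d) /\
  (forall d d', dorig d = dorig d' -> fconnect sigma d d').

Definition face_perm (sigma : {perm (E * bool)}) (d : E * bool) : E * bool :=
  sigma (drev d).

Definition faces (sigma : {perm (E * bool)}) : {set {set E * bool}} :=
  [set [set d' | fconnect (face_perm sigma) d d'] | d : E * bool].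

Definition planar_embedding (sigma : {perm (E * bool)}) : Prop :=
  rotation_system sigma /\
  ((0 < #|E|)%N -> (#|V| + #|faces sigma| = #|E| + 2)%N).

(* The ideal I generated by the paths in G (each of length >= 2, I in R^2).  *)
Variable G : pred (seq E).

Definition gens_ok : Prop :=
  forall g, G g -> (1 < size g)%N /\ exists v, is_qpath v g.

Definition in_I (s : seq E) : bool :=
  [exists i : 'I_(size s).+1, exists j : 'I_(size s).+1, G (drop i (take j s))].

Definition complete : Prop :=
  forall v s v' s', is_qpath v s -> is_qpath v' s' ->
    v = v' -> pend v s = pend v' s' -> in_I s -> in_I s'.

Definition acyclic : Prop :=
  forall v s, is_qpath v s -> ~~ in_I s -> pend v s = v -> s = [::].

(* path not in I has length < #|V|, so we enumerate paths of length < #|V|.   *)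
Definition Pb := (V * {n : 'I_#|V| & n.-tuple E})%type.
Definition pb_seq (x : Pb) : seq E := tagged x.2.
Definition qpred (x : Pb) : bool := is_qpath x.1 (pb_seq x) && ~~ in_I (pb_seq x).
Definition Qt := {x : Pb | qpred x}.

Definition qv (q : Qt) : V := (val q).1.
Definition qs (q : Qt) : seq E := pb_seq (val q).

(* The algebra k Gamma / I, as the k-space with basis Q.                      *)
Variable k : fieldType.
Definition Alg := {ffun Qt -> k^o}.

(* class in k Gamma / I of the path (v, s) (zero if the path is in I) *)
Definition pcls (v : V) (s : seq E) : Alg :=
  [ffun q => ((qv q == v) && (qs q == s))%:R].

Definition mulA (x y : Alg) : Alg :=
  \sum_(p : Qt) \sum_(q : Qt)
     if pend (qv p) (qs p) == qv q then (x p * y q) *: pcls (qv p) (qs p ++ qs q)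
     else 0.

Definition is_derivation (D : Alg -> Alg) : Prop :=
  (forall (a : k) (x y : Alg), D (a *: x + y) = a *: D x + D y) /\
  (forall x y : Alg, D (mulA x y) = mulA (D x) y + mulA x (D y)).

Definition is_inner (D : Alg -> Alg) : Prop :=
  exists a : Alg, forall x, D x = mulA a x - mulA x a.

(* \bar D_{r, \bar s}: induced by the derivation of k Gamma sending r to s
   and vanishing on other arrows and vertices; on a path a_1 ... a_n it is
   sum_{i, a_i = r} a_1 .. a_{i-1} s a_{i+1} .. a_n. *)
Definition Dr (r : E) (s : seq E) (x : Alg) : Alg :=
  \sum_(q : Qt) x q *:
    \sum_(i < size (qs q)) if nth r (qs q) i == r then
       pcls (qv q) (take i (qs q) ++ s ++ drop i.+1 (qs q)) else 0.

Definition B2idx := {rs : E * Qt |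
  [&& qv rs.2 == t rs.1, pend (qv rs.2) (qs rs.2) == h rs.1 & qs rs.2 != [:: rs.1]]}.

Variables (sigma : {perm (E * bool)}) (f0 : {set E * bool}).

(* index set of B_P : the faces other than the unbounded face f0 *)
Definition BPidx := {f : {set E * bool} | (f \in faces sigma) && (f != f0)}.

Definition Dface (f : {set E * bool}) (x : Alg) : Alg :=
  \sum_(d in f) (if d.2 then 1 else -1) *: Dr d.1 [:: d.1] x.

Definition hh1_family (i : (B2idx + BPidx)%type) : Alg -> Alg :=
  match i with
  | inl rs => Dr (val rs).1 (qs (val rs).2)
  | inr f => Dface (val f)
  end.

End Quiver.

(* The classes of the family F : I -> Der form a k-basis of HH^1 = Der/Inn. *)
Definition hh1_basis (V E : finType) (t h : E -> V) (G : pred (seq E))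
  (k : fieldType) (I : finType) (F : I -> Alg t h G k -> Alg t h G k) : Prop :=
  (forall i, is_derivation (F i)) /\
  (forall c : I -> k, is_inner (fun x => \sum_i c i *: F i x) -> forall i, c i = 0) /\
  (forall D, is_derivation D ->
     exists c : I -> k, is_inner (fun x => D x - \sum_i c i *: F i x)).

(* Main.v *)
Require Import Defs.
From HB Require Import structures.
From mathcomp Require Import all_boot all_order all_algebra all_fingroup.
From mathcomp Require Import zify ring.
Set Implicit Arguments. Unset Strict Implicit. Unset Printing Implicit Defensive.

Module P1.

Section Paths.
Variables (V E : finType) (t h : E -> V) (G : pred (seq E)).

Local Notation qp := (is_qpath t h).
Local Notation pe := (pend h).
Local Notation inI := (in_I G).

Lemma qpath_cat v s1 s2 : qp v (s1 ++ s2) = qp v s1 && qp (pe v s1) s2.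
Proof.
case: s1 => [|e s1] //=.
rewrite cat_path -andbA; congr (_ && (_ && _)).
case: s2 => [|f s2] //=; rewrite /consec /pend /= last_map eq_sym //.
Qed.

Lemma pend_cat v s1 s2 : pe v (s1 ++ s2) = pe (pe v s1) s2.
Proof. by rewrite /pend map_cat last_cat. Qed.

Lemma qpath1 v r : qp v [:: r] = (t r == v).
Proof. by rewrite /= andbT. Qed.

Lemma pend1 v r : pe v [:: r] = h r.
Proof. by []. Qed.

Lemma in_I_cat s1 s2 s3 : G s2 -> inI (s1 ++ s2 ++ s3).
Proof.
move=> Gs; apply/existsP.
have Hi : (size s1 < (size (s1 ++ s2 ++ s3)).+1)%N by rewrite !size_cat; lia.
have Hj : (size s1 + size s2 < (size (s1 ++ s2 ++ s3)).+1)%N by rewrite !size_cat; lia.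
exists (Ordinal Hi); apply/existsP; exists (Ordinal Hj) => /=.
rewrite catA take_size_cat ?size_cat // drop_size_cat //.
Qed.

Lemma in_I_split s : inI s -> exists s1 s2 s3, s = s1 ++ s2 ++ s3 /\ G s2.
Proof.
case/existsP=> i /existsP [j Hg].
exists (take i (take j s)), (drop i (take j s)), (drop j s); split => //.
by rewrite catA cat_take_drop cat_take_drop.
Qed.

Lemma in_I_sub s1 s2 s3 : inI s2 -> inI (s1 ++ s2 ++ s3).
Proof.
case/in_I_split=> [a [b [c [-> Gb]]]].
by rewrite -!catA catA catA -(catA (s1 ++ a)); apply: in_I_cat.
Qed.

Lemma in_I_subl s1 s2 : inI s2 -> inI (s1 ++ s2).
Proof. by move=> H; rewrite -[s1 ++ s2]cats0 -catA; apply: in_I_sub. Qed.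

Lemma in_I_subr s1 s2 : inI s1 -> inI (s1 ++ s2).
Proof. by move=> H; rewrite -[s1 ++ s2]cat0s; apply: in_I_sub. Qed.

Hypothesis Hg : gens_ok t h G.

Lemma in_I_size s : inI s -> (1 < size s)%N.
Proof.
case/in_I_split=> [a [b [c [-> Gb]]]].
have [H _] := Hg Gb; rewrite !size_cat; lia.
Qed.

Lemma qpath_swap v a b s1 s2 :
  qp v (a ++ s1 ++ b) -> qp (pe v a) s2 -> pe (pe v a) s2 = pe (pe v a) s1 ->
  qp v (a ++ s2 ++ b) /\ pe v (a ++ s2 ++ b) = pe v (a ++ s1 ++ b).
Proof.
rewrite !qpath_cat => /and3P [-> H1 H2] H3 H4; split.
  by rewrite H3 H4 H2.
by rewrite !pend_cat H4.
Qed.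

Hypothesis Hac : acyclic t h G.

Lemma arrow_neq r : t r != h r.
Proof.
apply/eqP=> e.
have := Hac (v := t r) (s := [:: r]); rewrite qpath1 eqxx => /(_ isT).
case: (boolP (inI [:: r])) => [/in_I_size //|H /(_ isT)].
by rewrite pend1 e => /(_ erefl).
Qed.

End Paths.

End P1.
Import P1.

Module P2.
Import GRing.Theory.
Local Open Scope ring_scope.

Section Alg.
Variables (V E : finType) (t h : E -> V) (G : pred (seq E)) (k : fieldType).

Local Notation qp := (is_qpath t h).
Local Notation pe := (pend h).
Local Notation inI := (in_I G).
Local Notation A := (Alg t h G k).
Local Notation Q := (Qt t h G).
Local Notation pc := (pcls t h G k).
Local Notation mA := (@Defs.mulA V E t h G k).

Definition rep v w := [&& qp v w, ~~ inI w & (size w < #|V|)%N].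

Lemma rep_size v w : rep v w -> (size w < #|V|)%N.
Proof. by case/and3P. Qed.
Lemma rep_pred v w (H : rep v w) : (size w < #|V|)%N ->
  qpred t h G (v, existT (fun n : 'I_#|V| => n.-tuple E) (Ordinal (rep_size H)) (in_tuple w)).
Proof. by move=> _; rewrite /qpred /pb_seq /=; case/and3P: (H) => -> ->. Qed.

Definition mkQ v w (H : rep v w) : Q :=
  @exist (Pb V E) (@qpred V E t h G) _ (rep_pred H (rep_size H)).

Lemma mkQv v w (H : rep v w) : qv (mkQ H) = v.
Proof. by []. Qed.

Lemma mkQs v w (H : rep v w) : qs (mkQ H) = w.
Proof. by []. Qed.

Lemma repQ (q : Q) : rep (qv q) (qs q).
Proof.
case: q => [[v [n s]] /= Hq]; rewrite /rep /qv /qs /=.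
move: Hq; rewrite /qpred /= => /andP [-> ->] /=.
by rewrite /pb_seq /= size_tuple ltn_ord.
Qed.

Lemma qinj (q1 q2 : Q) : qv q1 = qv q2 -> qs q1 = qs q2 -> q1 = q2.
Proof.
case: q1 q2 => [[v1 [n1 s1]] H1] [[v2 [n2 s2]] H2]; rewrite /qv /qs /pb_seq /= => ev es.
apply: val_inj => /=; subst v2.
have en : n1 = n2 by apply: val_inj; rewrite /= -(size_tuple s1) -(size_tuple s2) es.
subst n2; have -> : s1 = s2 by apply: val_inj.
by [].
Qed.

Definition bq (q : Q) : A := pc (qv q) (qs q).

Lemma bqE q : bq q = [ffun q' => (q' == q)%:R].
Proof.
apply/ffunP=> q'; rewrite !ffunE.
case: (eqVneq q' q) => [->|ne]; first by rewrite !eqxx.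
case: (boolP ((qv q' == qv q) && (qs q' == qs q))) => // /andP [/eqP a /eqP b].
by rewrite (qinj a b) eqxx in ne.
Qed.

Lemma bqq q q' : bq q q' = (q' == q)%:R.
Proof. by rewrite bqE ffunE. Qed.

Lemma pcls_rep v w (H : rep v w) : pc v w = bq (mkQ H).
Proof. by rewrite /bq mkQv mkQs. Qed.

Lemma pcls0 v w : ~~ rep v w -> pc v w = 0.
Proof.
move=> nr; apply/ffunP=> q; rewrite !ffunE.
case: (boolP ((qv q == v) && (qs q == w))) => // /andP [/eqP ev /eqP ew].
by move: nr; rewrite -ev -ew repQ.
Qed.

Lemma scale_coef (a : k) (x : A) q : (a *: x) q = a * x q.
Proof. exact: ffunE. Qed.

Lemma add_coef (x y : A) q : (x + y) q = x q + y q.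
Proof. exact: ffunE. Qed.
Lemma opp_coef (x : A) q : (- x) q = - x q.
Proof. exact: ffunE. Qed.
Lemma sub_coef (x y : A) q : (x - y) q = x q - y q.
Proof. by rewrite add_coef opp_coef. Qed.
Lemma zero_coef q : (0 : A) q = 0.
Proof. exact: ffunE. Qed.

Lemma sum_coef I (r : seq I) (P : pred I) (F : I -> A) q :
  (\sum_(i <- r | P i) F i) q = \sum_(i <- r | P i) F i q.
Proof.
elim: r => [|a r IH]; first by rewrite !big_nil zero_coef.
by rewrite !big_cons; case: (P a); rewrite ?add_coef IH.
Qed.

Lemma scale_regE (a b : k^o) : a *: b = a * b.
Proof. by []. Qed.

Lemma algE (x : A) : x = \sum_q x q *: bq q.
Proof.
apply/ffunP=> q; rewrite sum_coef (bigD1 q) //= big1 => [|q' nq].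
  by rewrite scale_coef bqq eqxx addr0 mulr1.
by rewrite scale_coef bqq eq_sym (negbTE nq) mulr0.
Qed.

Definition mb (p q : Q) : A :=
  if pe (qv p) (qs p) == qv q then pc (qv p) (qs p ++ qs q) else 0.

Lemma mulAE x y : mA x y = \sum_p \sum_q (x p * y q) *: mb p q.
Proof.
apply: eq_bigr => p _; apply: eq_bigr => q _; rewrite /mb.
by case: ifP; rewrite ?scaler0.
Qed.

Lemma mulADl x y z : mA (x + y) z = mA x z + mA y z.
Proof.
rewrite !mulAE -big_split; apply: eq_bigr => p _; rewrite -big_split.
by apply: eq_bigr => q _; rewrite add_coef mulrDl scalerDl.
Qed.

Lemma mulADr x y z : mA x (y + z) = mA x y + mA x z.
Proof.
rewrite !mulAE -big_split; apply: eq_bigr => p _; rewrite -big_split.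
by apply: eq_bigr => q _; rewrite add_coef mulrDr scalerDl.
Qed.

Lemma mulAZl a x y : mA (a *: x) y = a *: mA x y.
Proof.
rewrite !mulAE scaler_sumr; apply: eq_bigr => p _; rewrite scaler_sumr.
by apply: eq_bigr => q _; rewrite scale_coef scalerA mulrA.
Qed.

Lemma mulAZr a x y : mA x (a *: y) = a *: mA x y.
Proof.
rewrite !mulAE scaler_sumr; apply: eq_bigr => p _; rewrite scaler_sumr.
by apply: eq_bigr => q _; rewrite scale_coef scalerA mulrCA.
Qed.

Lemma mulA0l y : mA 0 y = 0.
Proof. by rewrite -[X in mA X _](scale0r (0 : A)) mulAZl scale0r. Qed.
Lemma mulA0r y : mA y 0 = 0.
Proof. by rewrite -[X in mA _ X](scale0r (0 : A)) mulAZr scale0r. Qed.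

Lemma mulANl x y : mA (- x) y = - mA x y.
Proof. by rewrite -[- x]scaleN1r mulAZl scaleN1r. Qed.
Lemma mulANr x y : mA x (- y) = - mA x y.
Proof. by rewrite -[- y]scaleN1r mulAZr scaleN1r. Qed.
Lemma mulABl x y z : mA (x - y) z = mA x z - mA y z.
Proof. by rewrite mulADl mulANl. Qed.
Lemma mulABr x y z : mA x (y - z) = mA x y - mA x z.
Proof. by rewrite mulADr mulANr. Qed.

Lemma mulA_suml I (r : seq I) (P : pred I) (F : I -> A) y :
  mA (\sum_(i <- r | P i) F i) y = \sum_(i <- r | P i) mA (F i) y.
Proof.
elim: r => [|a r IH]; first by rewrite !big_nil mulA0l.
by rewrite !big_cons; case: (P a); rewrite ?mulADl IH.
Qed.

Lemma mulA_sumr I (r : seq I) (P : pred I) (F : I -> A) y :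
  mA y (\sum_(i <- r | P i) F i) = \sum_(i <- r | P i) mA y (F i).
Proof.
elim: r => [|a r IH]; first by rewrite !big_nil mulA0r.
by rewrite !big_cons; case: (P a); rewrite ?mulADr IH.
Qed.

Lemma mulA_bq p q : mA (bq p) (bq q) = mb p q.
Proof.
rewrite mulAE (bigD1 p) //= [X in _ + X]big1 => [|p' np]; last first.
  by apply: big1 => q' _; rewrite !bqq (negbTE np) mul0r scale0r.
rewrite addr0 (bigD1 q) //= [X in _ + X]big1 => [|q' nq]; last by rewrite !bqq (negbTE nq) mulr0 scale0r.
by rewrite !bqq !eqxx mulr1 scale1r addr0.
Qed.

Lemma mulA_exp x y : mA x y = \sum_p \sum_q (x p * y q) *: mA (bq p) (bq q).
Proof. by rewrite mulAE; apply: eq_bigr => p _; apply: eq_bigr => q _; rewrite mulA_bq. Qed.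

Lemma rep_cat v w w' : qp v w -> qp (pe v w) w' -> rep v (w ++ w') -> rep v w && rep (pe v w) w'.
Proof.
move=> H1 H2 /and3P [_ nI sz]; rewrite /rep H1 H2 /=.
apply/andP; split; apply/andP; split.
- by apply: contra nI; apply: in_I_subr.
- by apply: leq_ltn_trans sz; rewrite size_cat leq_addr.
- by apply: contra nI; apply: in_I_subl.
- by apply: leq_ltn_trans sz; rewrite size_cat leq_addl.
Qed.

Lemma mulA_pcls v w v' w' : qp v w -> qp v' w' ->
  mA (pc v w) (pc v' w') = if pe v w == v' then pc v (w ++ w') else 0.
Proof.
move=> H1 H2.
case: (boolP (rep v w)) => r1; last first.
  rewrite pcls0 // mulA0l; case: eqP => // e; rewrite pcls0 //.
  apply: contra r1 => /rep_cat; rewrite e => /(_ H1 H2) /andP [] //.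
case: (boolP (rep v' w')) => r2; last first.
  rewrite (pcls0 r2) mulA0r; case: eqP => // e; rewrite pcls0 //.
  apply: contra r2 => /rep_cat; rewrite e => /(_ H1 H2) /andP [] //.
by rewrite (pcls_rep r1) (pcls_rep r2) mulA_bq /mb !mkQv !mkQs.
Qed.

Lemma qpQ (q : Q) : qp (qv q) (qs q).
Proof. by case/and3P: (repQ q). Qed.

Lemma mulA_assoc_bq p q r :
  mA (mA (bq p) (bq q)) (bq r) = mA (bq p) (mA (bq q) (bq r)).
Proof.
rewrite /bq !mulA_pcls ?qpQ //.
case: (eqP (x := pe (qv p) (qs p))) => e1; case: (eqP (x := pe (qv q) (qs q))) => e2.
- rewrite !mulA_pcls ?qpQ ?qpath_cat ?e1 ?e2 ?eqxx ?qpQ ?catA ?pend_cat ?e1 //=.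
  by rewrite e2 eqxx.
- rewrite mulA0r mulA_pcls ?qpath_cat ?e1 ?qpQ ?pend_cat ?e1 //=.
  by move/eqP: e2 => /negbTE ->.
- by rewrite mulA0l mulA_pcls ?qpath_cat ?e2 ?qpQ //; move/eqP: e1 => /negbTE ->.
- by rewrite mulA0l mulA0r.
Qed.

Lemma mulA_lexp x y : mA x y = \sum_p x p *: mA (bq p) y.
Proof.
rewrite {1}[x]algE mulA_suml; apply: eq_bigr => p _; exact: mulAZl.
Qed.

Lemma mulA_rexp x y : mA x y = \sum_q y q *: mA x (bq q).
Proof.
rewrite {1}[y]algE mulA_sumr; apply: eq_bigr => p _; exact: mulAZr.
Qed.

Lemma mulA_assoc x y z : mA (mA x y) z = mA x (mA y z).
Proof.
rewrite (mulA_lexp x y) (mulA_lexp x (mA y z)) mulA_suml; apply: eq_bigr => p _.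
rewrite mulAZl; congr (_ *: _).
rewrite (mulA_rexp (bq p) y) (mulA_lexp y z) mulA_suml mulA_sumr; apply: eq_bigr => q _.
rewrite mulAZl mulAZr; congr (_ *: _).
rewrite (mulA_rexp (mA (bq p) (bq q)) z) (mulA_rexp (bq q) z) mulA_sumr; apply: eq_bigr => r _.
by rewrite mulAZr mulA_assoc_bq.
Qed.

End Alg.

End P2.
Import P2.

Module P3.
Import GRing.Theory.
Local Open Scope ring_scope.

Section Der.
Variables (V E : finType) (t h : E -> V) (G : pred (seq E)) (k : fieldType).

Local Notation qp := (is_qpath t h).
Local Notation pe := (pend h).
Local Notation inI := (in_I G).
Local Notation A := (Alg t h G k).
Local Notation Q := (Qt t h G).
Local Notation pc := (pcls t h G k).
Local Notation mA := (@Defs.mulA V E t h G k).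
Local Notation bq := (@bq V E t h G k).
Local Notation rep := (@rep V E t h G).

Definition dlin (D : A -> A) := forall (a : k) (x y : A), D (a *: x + y) = a *: D x + D y.
Definition dleib (D : A -> A) := forall x y : A, D (mA x y) = mA (D x) y + mA x (D y).

Section Lin.
Variables (D : A -> A) (HD : dlin D).
Lemma dlin0 : D 0 = 0.
Proof.
have := HD 1 0 0; rewrite scale1r addr0 scale1r => H.
by apply: (addrI (D 0)); rewrite addr0 -H.
Qed.
Lemma dlinD x y : D (x + y) = D x + D y.
Proof. by have := HD 1 x y; rewrite !scale1r. Qed.
Lemma dlinZ a x : D (a *: x) = a *: D x.
Proof. by have := HD a x 0; rewrite !addr0 dlin0 addr0. Qed.
Lemma dlinN x : D (- x) = - D x.
Proof. by rewrite -scaleN1r dlinZ scaleN1r. Qed.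
Lemma dlinB x y : D (x - y) = D x - D y.
Proof. by rewrite dlinD dlinN. Qed.
Lemma dlin_sum I (r : seq I) (P : pred I) (F : I -> A) :
  D (\sum_(i <- r | P i) F i) = \sum_(i <- r | P i) D (F i).
Proof.
elim: r => [|a r IH]; first by rewrite !big_nil dlin0.
by rewrite !big_cons; case: (P a); rewrite ?dlinD IH.
Qed.
Lemma dlin_exp x : D x = \sum_q x q *: D (bq q).
Proof. by rewrite {1}[x]algE dlin_sum; apply: eq_bigr => q _; rewrite dlinZ. Qed.

Definition LB x y := D (mA x y) = mA (D x) y + mA x (D y).

Lemma LB_suml I (r : seq I) (P : pred I) (c : I -> k) (F : I -> A) y :
  (forall i, LB (F i) y) -> LB (\sum_(i <- r | P i) c i *: F i) y.
Proof.
move=> H; rewrite /LB mulA_suml dlin_sum dlin_sum mulA_suml mulA_suml -big_split.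
apply: eq_bigr => i _; rewrite mulAZl dlinZ dlinZ mulAZl mulAZl H scalerDr //.
Qed.

Lemma LB_sumr I (r : seq I) (P : pred I) (c : I -> k) (F : I -> A) x :
  (forall i, LB x (F i)) -> LB x (\sum_(i <- r | P i) c i *: F i).
Proof.
move=> H; rewrite /LB mulA_sumr dlin_sum dlin_sum mulA_sumr mulA_sumr -big_split.
apply: eq_bigr => i _; rewrite mulAZr dlinZ dlinZ mulAZr mulAZr H scalerDr //.
Qed.

Lemma dleib_basis :
  (forall p q, D (mA (bq p) (bq q)) = mA (D (bq p)) (bq q) + mA (bq p) (D (bq q))) ->
  dleib D.
Proof.
move=> Hb x y; rewrite [x]algE [y]algE.
apply: LB_suml => p; apply: LB_sumr => q; exact: Hb.
Qed.

End Lin.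

Definition is_der (D : A -> A) := dlin D /\ dleib D.

Lemma is_derP D : is_der D <-> is_derivation D.
Proof. by []. Qed.

Hypothesis Hg : gens_ok t h G.
Hypothesis Hc : complete t h G.
Hypothesis Hac : acyclic t h G.

Section DrSec.
Variables (r : E) (s : seq E).
Hypothesis Hs1 : qp (t r) s.
Hypothesis Hs2 : pe (t r) s = h r.
Hypothesis Hs3 : s != [::].

Definition rp i (w : seq E) := take i w ++ s ++ drop i.+1 w.

Definition dp v w : A :=
  \sum_(0 <= i < size w) if nth r w i == r then pc v (rp i w) else 0.

Lemma wsplit w i : (i < size w)%N -> nth r w i = r -> w = take i w ++ [:: r] ++ drop i.+1 w.
Proof. by move=> H e; rewrite /= -e -drop_nth // cat_take_drop. Qed.

Lemma rp_ok v w i : qp v w -> (i < size w)%N -> nth r w i = r ->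
  qp v (rp i w) /\ pe v (rp i w) = pe v w.
Proof.
move=> Hq Hi e; rewrite /rp.
have Hw := wsplit Hi e.
rewrite {1}Hw in Hq; rewrite [in RHS]Hw.
have H1 : t r = pe v (take i w).
  by move: Hq; rewrite !qpath_cat qpath1 => /and3P [_ /eqP -> _].
apply: qpath_swap => //; rewrite -H1 //.
Qed.

Lemma rp_size w i : (i < size w)%N -> (size w <= size (rp i w))%N.
Proof.
move=> Hi; rewrite /rp !size_cat size_takel ?size_drop; last exact: ltnW.
have : (0 < size s)%N by case: (s) Hs3.
lia.
Qed.

Lemma rp_rep v w i : qp v w -> (i < size w)%N -> nth r w i = r -> ~~ rep v w -> ~~ rep v (rp i w).
Proof.
move=> Hq Hi e nr; have [Q1 Q2] := rp_ok Hq Hi e.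
apply/negP => /and3P [_ nI sz]; apply: (negP nr).
rewrite /P2.rep Hq /=; apply/andP; split.
  by apply: contra nI => HI; exact: Hc Hq Q1 erefl (esym Q2) HI.
exact: leq_ltn_trans (rp_size Hi) sz.
Qed.

Lemma dp0 v w : qp v w -> ~~ rep v w -> dp v w = 0.
Proof.
move=> Hq Hr; rewrite /dp big_nat big1 // => i /andP [_ Hi].
case: eqP => // e; exact: pcls0 _ (rp_rep Hq Hi e Hr).
Qed.

Lemma Dr_lin : dlin (Dr r s).
Proof.
move=> a x y; rewrite /Dr scaler_sumr -big_split; apply: eq_bigr => q _.
by rewrite add_coef scale_coef scalerDl scalerA.
Qed.

Lemma Dr_bq q : Dr r s (bq q) = dp (qv q) (qs q).
Proof.
rewrite /Dr (bigD1 q) //= [X in _ + X]big1 => [|q' nq]; last by rewrite bqq (negbTE nq) scale0r.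
by rewrite bqq eqxx scale1r addr0 /dp big_mkord.
Qed.

Lemma Dr_pcls v w : qp v w -> Dr r s (pc v w) = dp v w.
Proof.
move=> Hq; case: (boolP (rep v w)) => Hr.
  by rewrite (pcls_rep k Hr) Dr_bq mkQv mkQs.
by rewrite pcls0 // dlin0 ?dp0 //; exact: Dr_lin.
Qed.

Lemma mA_if_l (b : bool) (X Y : A) : mA (if b then X else 0) Y = if b then mA X Y else 0.
Proof. by case: b; rewrite ?mulA0l. Qed.
Lemma mA_if_r (b : bool) (X Y : A) : mA Y (if b then X else 0) = if b then mA Y X else 0.
Proof. by case: b; rewrite ?mulA0r. Qed.

Lemma dp_mull v w v' w' : qp v w -> qp v' w' ->
  mA (dp v w) (pc v' w') = if pe v w == v' then
     \sum_(0 <= i < size w) (if nth r w i == r then pc v (rp i w ++ w') else 0) else 0.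
Proof.
move=> H1 H2; rewrite /dp mulA_suml.
case: eqP => e; last first.
  rewrite big_nat big1 // => i /andP [_ Hi]; rewrite mA_if_l; case: eqP => // en.
  have [Q1 Q2] := rp_ok H1 Hi en.
  by rewrite mulA_pcls // Q2; move/eqP: e => /negbTE ->.
rewrite !big_nat; apply: eq_bigr => i /andP [_ Hi]; rewrite mA_if_l; case: eqP => // en.
have [Q1 Q2] := rp_ok H1 Hi en.
by rewrite mulA_pcls // Q2 e eqxx.
Qed.

Lemma dp_mulr v w v' w' : qp v w -> qp v' w' ->
  mA (pc v w) (dp v' w') = if pe v w == v' then
     \sum_(0 <= i < size w') (if nth r w' i == r then pc v (w ++ rp i w') else 0) else 0.
Proof.
move=> H1 H2; rewrite /dp mulA_sumr.
case: eqP => e; last first.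
  rewrite big_nat big1 // => i /andP [_ Hi]; rewrite mA_if_r; case: eqP => // en.
  have [Q1 Q2] := rp_ok H2 Hi en.
  by rewrite mulA_pcls //; move/eqP: e => /negbTE ->.
rewrite !big_nat; apply: eq_bigr => i /andP [_ Hi]; rewrite mA_if_r; case: eqP => // en.
have [Q1 Q2] := rp_ok H2 Hi en.
by rewrite mulA_pcls // e eqxx.
Qed.

Lemma dp_cat v w w' :
  dp v (w ++ w') =
     \sum_(0 <= i < size w) (if nth r w i == r then pc v (rp i w ++ w') else 0) +
     \sum_(0 <= i < size w') (if nth r w' i == r then pc v (w ++ rp i w') else 0).
Proof.
rewrite /dp size_cat (@big_cat_nat _ _ _ (size w)) ?leq_addr //=.
congr (_ + _).
  rewrite !big_nat; apply: eq_bigr => i /andP [_ Hi].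
  rewrite nth_cat Hi /rp take_cat Hi drop_cat.
  case: ltnP => Hi2; first by rewrite -!catA.
  have -> : i.+1 = size w by apply/eqP; rewrite eqn_leq Hi Hi2.
  by rewrite subnn drop0 drop_size cats0 -catA.
rewrite -{1}(add0n (size w)) big_addn addKn !big_nat; apply: eq_bigr => i /andP [_ Hi].
rewrite nth_cat ltnNge leq_addl /= addnK /rp take_cat ltnNge leq_addl /= addnK.
rewrite drop_cat.
have -> : ((i + size w).+1 < size w)%N = false by lia.
have -> : ((i + size w).+1 - size w)%N = i.+1 by lia.
by rewrite -!catA.
Qed.

Lemma Dr_leib : dleib (Dr r s).
Proof.
apply: dleib_basis; first exact: Dr_lin.
move=> p q; rewrite mulA_bq /mb !Dr_bq /bq.
rewrite dp_mull ?qpQ // dp_mulr ?qpQ //.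
case: eqP => e; last by rewrite dlin0 ?addr0 //; exact: Dr_lin.
rewrite Dr_pcls ?dp_cat // qpath_cat qpQ e qpQ //.
Qed.

Lemma Dr_der : @is_derivation V E t h G k (Dr r s).
Proof. split; [exact: Dr_lin | exact: Dr_leib]. Qed.

End DrSec.

End Der.

End P3.
Import P3.

Module P4.
Import GRing.Theory.
Local Open Scope ring_scope.

Section Main.
Variables (V E : finType) (t h : E -> V) (G : pred (seq E)) (k : fieldType).

Local Notation qp := (is_qpath t h).
Local Notation pe := (pend h).
Local Notation inI := (in_I G).
Local Notation A := (Alg t h G k).
Local Notation Q := (Qt t h G).
Local Notation pc := (pcls t h G k).
Local Notation mA := (@Defs.mulA V E t h G k).
Local Notation bq := (@bq V E t h G k).
Local Notation rep := (@rep V E t h G).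
Local Notation isd := (@is_derivation V E t h G k).

Lemma isd_comb I (r : seq I) (P : pred I) (c : I -> k) (F : I -> A -> A) :
  (forall i, isd (F i)) -> isd (fun x => \sum_(i <- r | P i) c i *: F i x).
Proof.
move=> H; split.
  move=> a x y; rewrite scaler_sumr -big_split; apply: eq_bigr => i _.
  by have [-> _] := H i; rewrite scalerDr !scalerA mulrC.
move=> x y; rewrite mulA_suml mulA_sumr -big_split; apply: eq_bigr => i _.
by have [_ ->] := H i; rewrite scalerDr mulAZl mulAZr.
Qed.

Lemma isd_sub D1 D2 : isd D1 -> isd D2 -> isd (fun x => D1 x - D2 x).
Proof.
move=> [L1 M1] [L2 M2]; split.
  by move=> a x y; rewrite L1 L2 scalerBr addrACA opprD.
move=> x y; rewrite M1 M2 mulABl mulABr; rewrite !opprD !addrA; congr (_ + _).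
by rewrite addrAC -!addrA; congr (_ + _); rewrite addrC.
Qed.

Lemma isd_ad a : isd (fun x => mA a x - mA x a).
Proof.
split.
  move=> b x y; rewrite mulADr mulADl mulAZr mulAZl scalerBr.
  by rewrite addrACA opprD.
move=> x y; rewrite mulABl mulABr !mulA_assoc.
rewrite !addrA; congr (_ - _); rewrite addrNK //.
Qed.


Hypothesis Hg : gens_ok t h G.
Hypothesis Hc : complete t h G.
Hypothesis Hac : acyclic t h G.

Lemma rep_v u : rep u [::].
Proof.
rewrite /P2.rep /=; apply/andP; split.
  by apply/negP => /(in_I_size Hg).
by apply/card_gt0P; exists u.
Qed.

Lemma rep_a r : rep (t r) [:: r].
Proof.
rewrite /P2.rep qpath1 eqxx /=; apply/andP; split.
  by apply/negP => /(in_I_size Hg).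
have Hn := arrow_neq Hg Hac r.
apply: leq_trans (max_card (mem [set t r; h r])); by rewrite cards2 Hn.
Qed.

Definition vQ u := mkQ (rep_v u).
Definition aQ r := mkQ (rep_a r).
Definition ev u : A := pc u [::].
Definition ea r : A := pc (t r) [:: r].

Lemma ev_bq u : ev u = bq (vQ u).
Proof. exact: pcls_rep. Qed.
Lemma ea_bq r : ea r = bq (aQ r).
Proof. exact: pcls_rep. Qed.

Lemma vQ_eq (q : Q) : qs q = [::] -> q = vQ (qv q).
Proof. by move=> e; apply: qinj; rewrite ?mkQv ?mkQs. Qed.
Lemma aQ_eq (q : Q) r : qs q = [:: r] -> q = aQ r.
Proof.
move=> e; apply: qinj; rewrite ?mkQv ?mkQs //.
by have := qpQ q; rewrite e qpath1 => /eqP.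
Qed.

Lemma mA_ev_l u v w : qp v w -> mA (ev u) (pc v w) = if u == v then pc v w else 0.
Proof. by move=> H; rewrite /ev mulA_pcls //=; case: eqP => // <-. Qed.
Lemma mA_ev_r u v w : qp v w -> mA (pc v w) (ev u) = if pe v w == u then pc v w else 0.
Proof. by move=> H; rewrite /ev mulA_pcls // cats0. Qed.

Lemma coef_ev_r x u q : (mA x (ev u)) q = x q * (pe (qv q) (qs q) == u)%:R.
Proof.
rewrite mulA_lexp sum_coef (bigD1 q) //= big1 => [|p np].
  by rewrite addr0 scale_coef /bq mA_ev_r ?qpQ //; case: eqP; rewrite ?bqq ?eqxx ?zero_coef.
rewrite scale_coef /bq mA_ev_r ?qpQ //; case: eqP; rewrite ?zero_coef ?mulr0 //.
by rewrite -/(bq p) bqq eq_sym (negbTE np) mulr0.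
Qed.

Lemma coef_ev_l x u q : (mA (ev u) x) q = x q * (qv q == u)%:R.
Proof.
rewrite mulA_rexp sum_coef (bigD1 q) //= big1 => [|p np].
  by rewrite addr0 scale_coef /bq mA_ev_l ?qpQ // eq_sym; case: eqP; rewrite ?bqq ?eqxx ?zero_coef.
rewrite scale_coef /bq mA_ev_l ?qpQ //; case: eqP; rewrite ?zero_coef ?mulr0 //.
by rewrite -/(bq p) bqq eq_sym (negbTE np) mulr0.
Qed.

Lemma qpend_neq (q : Q) : qs q != [::] -> pe (qv q) (qs q) != qv q.
Proof.
move=> ne; apply/eqP=> e; move/eqP: ne; apply.
by apply: (Hac (qpQ q)) => //; case/and3P: (repQ q).
Qed.

Lemma der_unique T : isd T -> (forall u, T (ev u) = 0) -> (forall r, T (ea r) = 0) ->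
  forall x, T x = 0.
Proof.
move=> [L M] Hv Ha.
have Hp : forall w v, qp v w -> T (pc v w) = 0.
  elim=> [|r w IH] v; first by move=> _; exact: Hv.
  rewrite -cat1s qpath_cat qpath1 => /andP [/eqP <- Hw].
  rewrite -(_ : mA (ea r) (pc (h r) w) = pc (t r) ([:: r] ++ w)); last first.
    by rewrite /ea mulA_pcls ?qpath1 // eqxx.
  by rewrite M Ha IH // mulA0l mulA0r addr0.
move=> x; rewrite (dlin_exp L) big1 // => q _.
by rewrite /bq Hp ?qpQ // scaler0.
Qed.


Lemma Dr_ev r s u : Dr r s (ev u) = 0.
Proof. by rewrite ev_bq Dr_bq /dp mkQs big_geq. Qed.

Lemma Dr_ea r' s r : Dr r' s (ea r) = if r == r' then pc (t r) s else 0.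
Proof.
rewrite ea_bq Dr_bq /dp mkQs mkQv big_nat1 /=.
by rewrite /rp /= cats0 eq_sym.
Qed.

Definition chi (f : {set E * bool}) (r : E) : k :=
  \sum_(d in f) (if d.2 then 1 else -1) * (d.1 == r)%:R.

Lemma Dface_ea f r : Dface f (ea r) = chi f r *: ea r.
Proof.
rewrite /Dface /chi scaler_suml; apply: eq_bigr => d _.
rewrite Dr_ea eq_sym; case: eqP => [<-|_]; last by rewrite mulr0 !scale0r scaler0.
by rewrite mulr1.
Qed.

Lemma Dface_ev f u : Dface f (ev u) = 0.
Proof. by rewrite /Dface big1 // => d _; rewrite Dr_ev scaler0. Qed.

Variables (sigma : {perm (E * bool)}) (f0 : {set E * bool}).
Local Notation BP := (BPidx sigma f0).
Local Notation B2 := (B2idx t h G).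
Local Notation F := (@hh1_family V E t h G k sigma f0).

Lemma B2_ok (i : B2) : [/\ qp (t (val i).1) (qs (val i).2),
   pe (t (val i).1) (qs (val i).2) = h (val i).1 & qs (val i).2 != [::]].
Proof.
case: i => [[r q] /= /and3P [/eqP e1 /eqP e2 _]].
split; first by rewrite -e1 qpQ.
  by rewrite -e1.
apply/negP => /eqP e; move: e2; rewrite e /pend /= e1 => e3.
by move: (arrow_neq Hg Hac r); rewrite e3 eqxx.
Qed.

Lemma fam_der i : isd (F i).
Proof.
case: i => [i|f] /=.
  by case: (B2_ok i) => H1 H2 H3; apply: Dr_der.
apply: isd_comb => d; apply: Dr_der => //; by rewrite qpath1.
Qed.

Lemma fam_ev i u : F i (ev u) = 0.
Proof. by case: i => [i|f] /=; rewrite ?Dr_ev ?Dface_ev. Qed.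

Lemma famB2_ea (i : B2) r : F (inl i) (ea r) = if r == (val i).1 then bq (val i).2 else 0.
Proof.
rewrite /= Dr_ea; case: eqP => // ->.
case: i => [[r' q] /= /and3P [/eqP e1 _ _]]; by rewrite /bq e1.
Qed.

Lemma sum_ifeq (T : finType) (w : T) (X : T -> A) :
  \sum_u (if u == w then X u else 0) = X w.
Proof. by rewrite -big_mkcond big_pred1_eq. Qed.


Lemma a_vertex (a : A) : (forall u, mA a (ev u) = mA (ev u) a) ->
  a = \sum_u a (vQ u) *: ev u.
Proof.
move=> Hv; apply/ffunP => q; rewrite sum_coef.
case: (eqVneq (qs q) [::]) => e.
  rewrite (bigD1 (qv q)) //= big1 => [|u nu].
    by rewrite scale_coef ev_bq bqq -vQ_eq // eqxx mulr1 addr0.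
  rewrite scale_coef ev_bq bqq; case: eqP => [eq|]; last by rewrite mulr0.
  by move: nu; rewrite eq mkQv eqxx.
rewrite big1 => [|u _]; last first.
  rewrite scale_coef ev_bq bqq; case: eqP => [eq|]; last by rewrite mulr0.
  by move: e; rewrite eq mkQs eqxx.
have := congr1 (fun z : A => z q) (Hv (qv q)); rewrite /= coef_ev_r coef_ev_l eqxx.
by rewrite (negbTE (qpend_neq e)) mulr0 mulr1 => /esym.
Qed.

Lemma ad_vertex_ea (mu : V -> k) r :
  mA (\sum_u mu u *: ev u) (ea r) - mA (ea r) (\sum_u mu u *: ev u) = (mu (t r) - mu (h r)) *: ea r.
Proof.
rewrite mulA_suml mulA_sumr scalerBl; congr (_ - _).
  rewrite -(sum_ifeq (t r) (fun u => mu u *: ea r)); apply: eq_bigr => u _.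
  by rewrite mulAZl /ea mA_ev_l ?qpath1 //; case: eqP; rewrite ?scaler0.
rewrite -(sum_ifeq (h r) (fun u => mu u *: ea r)); apply: eq_bigr => u _.
by rewrite mulAZr /ea mA_ev_r ?qpath1 // pend1 eq_sym; case: eqP; rewrite ?scaler0.
Qed.

Lemma ad_vertex_ev (mu : V -> k) v :
  mA (\sum_u mu u *: ev u) (ev v) - mA (ev v) (\sum_u mu u *: ev u) = 0.
Proof.
rewrite mulA_suml mulA_sumr -sumrB big1 // => u _.
rewrite mulAZl mulAZr /ev mA_ev_l // mA_ev_r //= eq_sym.
by case: eqP => _; rewrite ?subrr.
Qed.

Lemma fam_sum_ea (c : B2 + BP -> k) r :
  \sum_i c i *: F i (ea r) =
  \sum_(i : B2) c (inl i) *: (if r == (val i).1 then bq (val i).2 else 0) +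
  (\sum_(f : BP) c (inr f) * chi (val f) r) *: ea r.
Proof.
rewrite big_sumType; congr (_ + _).
  by apply: eq_bigr => i _; rewrite famB2_ea.
rewrite scaler_suml; apply: eq_bigr => f _; by rewrite /= Dface_ea scalerA.
Qed.

Lemma coef_B2sum (c : B2 -> k) r q :
  (\sum_(i : B2) c i *: (if r == (val i).1 then bq (val i).2 else 0)) q =
  \sum_(i : B2) c i * ((val i == (r, q)) %:R).
Proof.
rewrite sum_coef; apply: eq_bigr => i _; rewrite scale_coef; congr (_ * _).
case: i => [[r' q'] Hi] /=; rewrite xpair_eqE eq_sym.
case: eqP => _ /=; last by rewrite zero_coef.
by rewrite bqq eq_sym.
Qed.

Lemma sum_B2_pick (c : B2 -> k) (i0 : B2) :
  \sum_(i : B2) c i * ((val i == val i0) %:R) = c i0.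
Proof.
rewrite (bigD1 i0) //= eqxx mulr1 big1 ?addr0 // => i ni.
by rewrite (inj_eq val_inj) (negbTE ni) mulr0.
Qed.

Lemma sum_B2_none (c : B2 -> k) r q : (forall i : B2, val i != (r, q)) ->
  \sum_(i : B2) c i * ((val i == (r, q)) %:R) = 0.
Proof. by move=> H; rewrite big1 // => i _; rewrite (negbTE (H i)) mulr0. Qed.

Hypothesis HK : forall (mu : V -> k) (c : BP -> k),
  (forall r, mu (t r) - mu (h r) + \sum_f c f * chi (val f) r = 0) -> forall f, c f = 0.

Lemma indep (c : B2 + BP -> k) :
  is_inner (fun x => \sum_i c i *: F i x) -> forall i, c i = 0.
Proof.
case=> a Ha.
have Hv : forall u, mA a (ev u) = mA (ev u) a.
  move=> u; apply/eqP; rewrite -subr_eq0; have := Ha (ev u); rewrite /= => <-.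
  by rewrite big1 // => i _; rewrite fam_ev scaler0.
have Ea := a_vertex Hv.
have Hr : forall r, \sum_i c i *: F i (ea r) = (a (vQ (t r)) - a (vQ (h r))) *: ea r.
  move=> r; have := Ha (ea r); rewrite /= => ->.
  by rewrite [in mA a _]Ea [in mA _ a]Ea ad_vertex_ea.
have HB2 : forall i : B2, c (inl i) = 0.
  move=> i; have := congr1 (fun z : A => z (val i).2) (Hr (val i).1).
  rewrite /= fam_sum_ea add_coef coef_B2sum scale_coef scale_coef ea_bq bqq.
  have -> : ((val i).2 == aQ (val i).1) = false.
    apply/negP => /eqP e; case: i e => [[r q] /= /and3P [_ _ ne]] e.
    by move: ne; rewrite e mkQs eqxx.
  by rewrite !mulr0 addr0 -surjective_pairing (sum_B2_pick (fun i => c (inl i))).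
have Hf : forall r, (a (vQ (t r)) - a (vQ (h r))) = \sum_(f : BP) c (inr f) * chi (val f) r.
  move=> r; have := congr1 (fun z : A => z (aQ r)) (Hr r).
  rewrite /= fam_sum_ea add_coef coef_B2sum scale_coef scale_coef ea_bq bqq eqxx mulr1 mulr1.
  by rewrite big1 ?add0r // => i _; rewrite HB2 mul0r.
have HF := HK (mu := fun u => - a (vQ u)) (c := fun f => c (inr f)).
case=> [i|f]; first exact: HB2.
apply: HF => r; rewrite -Hf; ring.
Qed.


Lemma coef_sumbq (g : Q -> k) q0 : (\sum_q g q *: bq q) q0 = g q0.
Proof.
rewrite sum_coef (bigD1 q0) //= big1 => [|q nq].
  by rewrite scale_coef bqq eqxx mulr1 addr0.
by rewrite scale_coef bqq eq_sym (negbTE nq) mulr0.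
Qed.

Lemma ad_add (a b x : A) :
  mA (a + b) x - mA x (a + b) = (mA a x - mA x a) + (mA b x - mA x b).
Proof. by rewrite mulADl mulADr opprD addrACA. Qed.

Lemma ev_idem u : mA (ev u) (ev u) = ev u.
Proof. by rewrite {2}/ev mA_ev_l // eqxx. Qed.

Lemma ev_orth u v : u != v -> mA (ev v) (ev u) = 0.
Proof. by move=> ne; rewrite {2}/ev mA_ev_l // eq_sym (negbTE ne). Qed.

Lemma ad_vertex_norm D : isd D -> exists a0 : A, forall u, D (ev u) = mA a0 (ev u) - mA (ev u) a0.
Proof.
move=> [L M].
pose a0 : A := \sum_q (if qs q == [::] then 0 else - D (ev (qv q)) q) *: bq q.
exists a0 => u; apply/ffunP => q; rewrite sub_coef coef_ev_r coef_ev_l /a0 coef_sumbq.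
have F1 : D (ev u) q = D (ev u) q * (pe (qv q) (qs q) == u)%:R + D (ev u) q * (qv q == u)%:R.
  by rewrite -{1}ev_idem M add_coef coef_ev_r coef_ev_l.
have F2 : forall v, v != u -> 0 = D (ev v) q * (pe (qv q) (qs q) == u)%:R + D (ev u) q * (qv q == v)%:R.
  move=> v ne; have := congr1 (fun z : A => z q) (M (ev v) (ev u)).
  have ne' : u != v by rewrite eq_sym.
  by rewrite (ev_orth ne') (dlin0 L) zero_coef add_coef coef_ev_r coef_ev_l.
case: (eqVneq (qs q) [::]) => e.
  rewrite e /= mul0r subrr; move: F1; rewrite e /=.
  case: eqP => _; last by rewrite !mulr0 addr0.
  by rewrite mulr1 => H; apply: (addrI (D (ev u) q)); rewrite addr0 -H.
have ne := qpend_neq e.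
case: (eqVneq (qv q) u) => ex.
  by subst u; rewrite (negbTE ne) mulr0 mulr1 sub0r opprK.
case: (eqVneq (pe (qv q) (qs q)) u) => ey.
  have := F2 (qv q) ex; rewrite ey !eqxx !mulr1 => /eqP; rewrite eq_sym addr_eq0 => /eqP ->.
  by rewrite mulr0 subr0 opprK.
by move: F1; rewrite (negbTE ex) (negbTE ey) !mulr0 addr0 => ->; rewrite subrr.
Qed.

Hypothesis HS : forall lam : E -> k, exists mu : V -> k, exists cf : BP -> k,
  forall r, lam r = mu (t r) - mu (h r) + \sum_f cf f * chi (val f) r.

Lemma spanning D : isd D -> exists c : B2 + BP -> k, is_inner (fun x => D x - \sum_i c i *: F i x).
Proof.
move=> HD; have [a0 Ha0] := ad_vertex_norm HD.
pose D1 := fun x => D x - (mA a0 x - mA x a0).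
have HD1 : isd D1 by apply: isd_sub => //; exact: isd_ad.
have D1v : forall u, D1 (ev u) = 0 by move=> u; rewrite /D1 Ha0 subrr.
have D1s : forall r q, D1 (ea r) q != 0 -> (qv q == t r) && (pe (qv q) (qs q) == h r).
  move=> r q nz; case: HD1 => L1 M1.
  have E1 : D1 (ea r) q = D1 (ea r) q * (qv q == t r)%:R.
    have := congr1 (fun z : A => z q) (M1 (ev (t r)) (ea r)).
    by rewrite /ea mA_ev_l ?qpath1 // eqxx -/(ea r) D1v mulA0l add0r coef_ev_l.
  have E2 : D1 (ea r) q = D1 (ea r) q * (pe (qv q) (qs q) == h r)%:R.
    have := congr1 (fun z : A => z q) (M1 (ea r) (ev (h r))).
    by rewrite /ea mA_ev_r ?qpath1 // pend1 eqxx -/(ea r) D1v mulA0r addr0 coef_ev_r.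
  move: E1 E2; case: eqP => _; last by rewrite mulr0 => e; rewrite e eqxx in nz.
  by case: eqP => _ //; rewrite mulr0 => _ e; rewrite e eqxx in nz.
have [mu [cf Hmu]] := HS (fun r => D1 (ea r) (aQ r)).
pose c := fun i : B2 + BP => match i with inl i => D1 (ea (val i).1) (val i).2 | inr f => cf f end.
pose a1 : A := \sum_u mu u *: ev u.
exists c, (a0 + a1).
pose T := fun x => (D x - \sum_i c i *: F i x) - (mA (a0 + a1) x - mA x (a0 + a1)).
have HT : isd T.
  apply: isd_sub; last exact: isd_ad.
  apply: isd_sub => //; apply: isd_comb; exact: fam_der.
move=> x; apply/eqP; rewrite -subr_eq0; apply/eqP.
apply: (der_unique HT) => [u|r].
  rewrite /T big1 => [|i _]; last by rewrite fam_ev scaler0.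
  by rewrite ad_add /a1 ad_vertex_ev addr0 Ha0 !subr0 subrr.
apply/ffunP => q; rewrite /T zero_coef sub_coef sub_coef fam_sum_ea add_coef coef_B2sum.
rewrite ad_add /a1 ad_vertex_ea add_coef scale_coef scale_coef.
have HD1q : D (ea r) q - (mA a0 (ea r) - mA (ea r) a0) q = D1 (ea r) q by rewrite /D1 [RHS]sub_coef.
rewrite -[X in X - _ - _](subrK ((mA a0 (ea r) - mA (ea r) a0) q)) HD1q.
case: (eqVneq q (aQ r)) => eqa.
  rewrite sum_B2_none => [|i]; last first.
    apply/eqP => ei; case: i ei => [[r' q'] /= /and3P [_ _ nr]] [er eq']; subst r' q'.
    by move: nr; rewrite eqa mkQs eqxx.
  rewrite eqa ea_bq bqq eqxx mulr1 Hmu /=; ring.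
rewrite ea_bq bqq (negbTE eqa) !mulr0.
case: (boolP ((qv q == t r) && (pe (qv q) (qs q) == h r))) => par.
  have Hi : [&& qv (r, q).2 == t (r, q).1, pend h (qv (r, q).2) (qs (r, q).2) == h (r, q).1
     & qs (r, q).2 != [:: (r, q).1]].
    case/andP: par => -> -> /=; apply/negP => /eqP e; move: eqa; rewrite (aQ_eq e) eqxx //.
  have := sum_B2_pick (fun i => c (inl i)) (exist _ (r, q) Hi); rewrite /= => ->.
  rewrite /c /=; ring.
have z : D1 (ea r) q = 0.
  by apply/eqP; apply: contraNT par; exact: D1s.
rewrite z sum_B2_none => [|i]; first by ring.
apply/eqP => ei; move: par; case: i ei => [[r' q'] /= /and3P [e1 e2 _]] [<- <-].
by rewrite e1 e2.
Qed.

End Main.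

End P4.
Import P4.

Module P5.
Import GRing.Theory.
Local Open Scope ring_scope.

Section Graph.
Variables (V E : finType) (t h : E -> V) (k : fieldType) (sigma : {perm (E * bool)}).

Local Notation fp := (face_perm sigma).
Local Notation D := (E * bool)%type.
Hypothesis Hrot : rotation_system t h sigma.
Definition chiG (f : {set D}) (r : E) : k :=
  \sum_(d in f) (if d.2 then 1 else -1) * (d.1 == r)%:R.
Definition face (d : D) : {set D} := [set d' | fconnect fp d d'].

Lemma drevK : involutive (@drev E).
Proof. by case=> e b; rewrite /drev /= negbK. Qed.

Lemma fp_inj : injective fp.
Proof. move=> x y; rewrite /face_perm => /perm_inj; exact: (inv_inj drevK). Qed.

Lemma face_mem d : d \in face d.
Proof. by rewrite /face inE connect0. Qed.

Lemma face_eq d d' : d' \in face d -> face d' = face d.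
Proof.
rewrite /face inE => c; apply/setP => x; rewrite !inE.
apply/idP/idP => H; first exact: connect_trans c H.
by apply: connect_trans _ H; rewrite (fconnect_sym fp_inj).
Qed.

Lemma faces_face f d : f \in faces sigma -> d \in f -> f = face d.
Proof.
case/imsetP => d0 _ -> Hd; rewrite -/(face d0) in Hd *.
by rewrite (face_eq Hd).
Qed.

Lemma face_in d : face d \in faces sigma.
Proof. by apply/imsetP; exists d. Qed.

Lemma face_fp d : face (fp d) = face d.
Proof. by apply: face_eq; rewrite /face inE fconnect1. Qed.

Lemma chiG_E f r : chiG f r = ((r, true) \in f)%:R - ((r, false) \in f)%:R.
Proof.
rewrite /chiG [LHS]big_mkcond (bigD1 (r, true)) //= (bigD1 (r, false)) /=; last by rewrite xpair_eqE andbF.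
rewrite big1 => [|d /andP [n1 n2]].
  by rewrite eqxx !mulr1 addr0; case: ((r, true) \in f); case: ((r, false) \in f); rewrite ?subr0 ?sub0r ?add0r ?addr0.
case: (d \in f) => //; case: eqP; rewrite ?mulr0 // => e.
by case: d n1 n2 e => e' [] /= n1 n2 er; subst e'; rewrite eqxx in n1 n2.
Qed.

(* the boundary of a face is a cycle *)
Lemma face_cycle f u : f \in faces sigma ->
  \sum_r chiG f r * ((t r == u)%:R - (h r == u)%:R) = 0.
Proof.
move=> Hf.
have -> : \sum_r chiG f r * ((t r == u)%:R - (h r == u)%:R) =
   \sum_(d in f) (((dorig t h d == u)%:R : k) - (dorig t h (drev d) == u)%:R).
  rewrite /chiG; under eq_bigr => r _ do rewrite mulr_suml.
  rewrite exchange_big /=; apply: eq_bigr => d _.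
  rewrite (bigD1 d.1) //= big1 => [|r nr]; last by rewrite eq_sym (negbTE nr) mulr0 mul0r.
  rewrite eqxx mulr1 addr0 /dorig /drev /=; case: d.2 => /=; ring.
rewrite sumrB; apply/eqP; rewrite subr_eq0; apply/eqP.
have Hc : forall d, (fp d \in f) = (d \in f).
  case/imsetP: Hf => d0 _ ->; move=> d; rewrite !inE -same_fconnect1_r //; exact: fp_inj.
rewrite (reindex_inj fp_inj) /=; apply: eq_big => d; first by rewrite Hc.
case: Hrot => Hs _.
by rewrite /face_perm Hs.
Qed.


Lemma mem_faces f d : f \in faces sigma -> (d \in f) = (f == face d).
Proof.
move=> Hf; apply/idP/eqP => [H|->]; [exact: faces_face | exact: face_mem].
Qed.

Lemma sigma_fp d : sigma d = fp (drev d).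
Proof. by rewrite /face_perm drevK. Qed.

Hypothesis Hconn : quiver_connected t h.

Lemma dart_const (C : D -> k) : (forall d, C (sigma d) = C d) -> (forall d, C (drev d) = C d) ->
  forall d d', C d = C d'.
Proof.
move=> Hs Hr.
have Hv : forall d d', dorig t h d = dorig t h d' -> C d = C d'.
  move=> d d' e; case: Hrot => _ /(_ d d' e) Hc.
  apply: (@fconnect_invariant _ sigma _ C _ d d' Hc) => x.
  by rewrite /= Hs eqxx.
have Hp : forall u w, connect (undir_adj t h) u w -> forall d d', dorig t h d = u -> dorig t h d' = w -> C d = C d'.
  move=> u w /connectP [p Hp ->] {w}.
  elim: p u Hp => [|x p IH] u /=; first by move=> _ d d' <- e; apply: Hv.
  case/andP => /existsP [e He] Hpx d d' Hd Hd'.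
  case/orP: He => /andP [/eqP e1 /eqP e2].
    rewrite (Hv d (e, true)) /dorig /= ?e1 -?Hd //.
    rewrite -[(e, true)]/(drev (e, false)) Hr; apply: (IH x Hpx) => //.
  rewrite (Hv d (e, false)) /dorig /= ?e1 -?Hd //.
  rewrite -[(e, false)]/(drev (e, true)) Hr; apply: (IH x Hpx) => //.
move=> d d'; exact: Hp (Hconn _ _) d d' erefl erefl.
Qed.

Variable f0 : {set D}.
Hypothesis Hf0 : f0 \in faces sigma.
Local Notation BP := (BPidx sigma f0).

Lemma dual_zero (c : BP -> k) : (forall r, \sum_f c f * chiG (val f) r = 0) -> forall f, c f = 0.
Proof.
move=> H.
pose C d := \sum_(f : BP) c f * (d \in val f)%:R.
have HC : forall d, C d = \sum_(f : BP) c f * (val f == face d)%:R.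
  move=> d; apply: eq_bigr => f _; rewrite mem_faces //; by case: f => f /= /andP [].
have Hr1 : forall r, C (r, true) = C (r, false).
  move=> r; have := H r; under eq_bigr do rewrite chiG_E mulrBr.
  by rewrite sumrB => /eqP; rewrite subr_eq0 => /eqP.
have Hr : forall d, C (drev d) = C d.
  by case=> r [] /=; rewrite /drev /= Hr1.
have Hs : forall d, C (sigma d) = C d.
  by move=> d; rewrite sigma_fp HC face_fp -HC Hr.
have Hall := dart_const Hs Hr.
have [d0 _ e0] := imsetP Hf0; have {}e0 : f0 = face d0 by rewrite e0.
have C0 : C d0 = 0.
  rewrite HC -e0 big1 // => f _; have /andP [_ /negbTE ->] := valP f.
  by rewrite mulr0.
move=> f; have := valP f; case/andP => /imsetP [d _ ed] _.
have {}ed : val f = face d by rewrite ed.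
have := Hall d d0; rewrite C0 HC (bigD1 f) //= ed eqxx mulr1 big1 ?addr0 // => f' nf.
case: eqP; rewrite ?mulr0 // => ef.
have e' : f' = f by apply: val_inj; rewrite /= ef -ed.
by rewrite e' eqxx in nf.
Qed.

End Graph.

End P5.
Import P5.

Module P6.
Import GRing.Theory Num.Theory.
Local Open Scope ring_scope.

Section Lap.
Variables (V E : finType) (t h : E -> V) (v0 : V).
Hypothesis Hconn : quiver_connected t h.

Lemma conn_const (T : Type) (g : V -> T) : (forall e, g (t e) = g (h e)) -> forall u w, g u = g w.
Proof.
move=> H u w; have /connectP [p Hp ->] := Hconn u w.
elim: p u Hp => [|x p IH] u //= /andP [/existsP [e He] Hpx].
rewrite -(IH x Hpx); case/orP: He => /andP [/eqP <- /eqP <-] //.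
Qed.

Local Notation n := #|V|.
Local Notation ev := (@enum_val V xpredT).
Local Notation rk := (@enum_rank V).

Definition av (R : nzRingType) (e : E) (i : 'I_n) : R := (t e == ev i)%:R - (h e == ev i)%:R.
Definition bv (R : nzRingType) (i : 'I_n) : R := (ev i == v0)%:R.
Definition Mg (R : nzRingType) : 'M[R]_n := \matrix_(i, j) (\sum_e av R e i * av R e j + bv R i * bv R j).

Lemma sum_rk (R : nzRingType) (y : 'I_n -> R) x : \sum_i y i * (x == ev i)%:R = y (rk x).
Proof.
rewrite (bigD1 (rk x)) //= enum_rankK eqxx mulr1 big1 ?addr0 // => i ni.
case: eqP; rewrite ?mulr0 // => e; move: ni; by rewrite e enum_valK eqxx.
Qed.

Lemma Mg_row (R : comNzRingType) (y : 'rV[R]_n) j :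
  (y *m Mg R) 0 j = \sum_e (y 0 (rk (t e)) - y 0 (rk (h e))) * av R e j + y 0 (rk v0) * bv R j.
Proof.
rewrite !mxE.
have -> : \sum_i y 0 i * Mg R i j = \sum_i (\sum_e y 0 i * av R e i * av R e j + y 0 i * bv R i * bv R j).
  by apply: eq_bigr => i _; rewrite mxE mulrDr mulr_sumr; congr (_ + _); [apply: eq_bigr => e _|]; ring.
rewrite big_split /=; congr (_ + _).
  rewrite exchange_big /=; apply: eq_bigr => e _; rewrite -mulr_suml; congr (_ * _).
  rewrite /av; under eq_bigr do rewrite mulrBr; rewrite sumrB !sum_rk //.
by rewrite -mulr_suml /bv; under eq_bigr do rewrite eq_sym; rewrite sum_rk.
Qed.

Lemma Mg_quad (R : comNzRingType) (y : 'rV[R]_n) :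
  \sum_j (y *m Mg R) 0 j * y 0 j = \sum_e (y 0 (rk (t e)) - y 0 (rk (h e))) ^+ 2 + y 0 (rk v0) ^+ 2.
Proof.
under eq_bigr do rewrite Mg_row mulrDl mulr_suml.
rewrite big_split /=; congr (_ + _).
  rewrite exchange_big /=; apply: eq_bigr => e _.
  under eq_bigr do rewrite -mulrA; rewrite -mulr_sumr expr2; congr (_ * _).
  rewrite /av; under eq_bigr do rewrite mulrC mulrBr.
  by rewrite sumrB !sum_rk.
under eq_bigr do rewrite -mulrA; rewrite -mulr_sumr expr2; congr (_ * _); rewrite /bv.
by under eq_bigr do rewrite mulrC eq_sym; rewrite sum_rk.
Qed.

Lemma Mg_rat_free (y : 'rV[rat]_n) : y *m Mg rat = 0 -> y = 0.
Proof.
move=> Hy.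
have Q : \sum_j (y *m Mg rat) 0 j * y 0 j = 0 by rewrite big1 // => j _; rewrite Hy mxE mul0r.
rewrite Mg_quad in Q.
have H0 : forall e, 0 <= (y 0 (rk (t e)) - y 0 (rk (h e))) ^+ 2 by move=> e; exact: sqr_ge0.
have S0 : 0 <= \sum_e (y 0 (rk (t e)) - y 0 (rk (h e))) ^+ 2 by apply: sumr_ge0 => e _.
move/eqP: Q; rewrite paddr_eq0 ?sqr_ge0 // => /andP [Q1 Q2].
have He : forall e, y 0 (rk (t e)) = y 0 (rk (h e)).
  move=> e; move: Q1; rewrite psumr_eq0 // => /allP /(_ e (mem_index_enum e)) /=.
  by rewrite sqrf_eq0 subr_eq0 => /eqP.
have Hc := @conn_const _ (fun v : V => y 0 (rk v)) He.
apply/rowP => i; rewrite mxE -(enum_valK i) (Hc _ v0).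
by move: Q2; rewrite sqrf_eq0 => /eqP.
Qed.

Lemma Mg_map (R : nzRingType) : map_mx (intr : int -> R) (Mg int) = Mg R.
Proof.
apply/matrixP => i j; rewrite !mxE rmorphD rmorph_sum /=; congr (_ + _).
  apply: eq_bigr => e _; rewrite rmorphM /= /av !rmorphB /= !rmorph_nat //.
by rewrite rmorphM /= /bv !rmorph_nat.
Qed.

Lemma Mg_det_int : \det (Mg int) != 0.
Proof.
apply/negP => /eqP H.
have : \det (Mg rat) == 0 by rewrite -Mg_map det_map_mx H rmorph0.
case/det0P => y ny Hy; move: ny; by rewrite (Mg_rat_free Hy) eqxx.
Qed.

Variable k : fieldType.
Hypothesis Hk : [pchar k] =i pred0.

Lemma intr_neq0 (z : int) : z != 0 -> (z%:~R : k) != 0.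
Proof.
have Hn := (pcharf0P k).1 Hk.
case: z => m nz /=; first by rewrite Hn; move: nz; apply: contra => /eqP ->.
by rewrite NegzE mulrNz oppr_eq0 Hn.
Qed.

Lemma Mg_k_free (y : 'rV[k]_n) : y *m Mg k = 0 -> y = 0.
Proof.
move=> Hy.
have U : Mg k \in unitmx.
  by rewrite unitmxE unitfE -Mg_map det_map_mx intr_neq0 // Mg_det_int.
by rewrite -(mulmxK U y) Hy mul0mx.
Qed.

Lemma lap_const (mu : V -> k) :
  (forall u, \sum_r (mu (t r) - mu (h r)) * ((t r == u)%:R - (h r == u)%:R) = 0) ->
  forall u w, mu u = mu w.
Proof.
move=> H.
pose y : 'rV[k]_n := \row_i (mu (ev i) - mu v0).
have Hy : y *m Mg k = 0.
  apply/rowP => j; rewrite Mg_row /y !mxE !enum_rankK subrr mul0r addr0.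
  rewrite -[RHS](H (ev j)); apply: eq_bigr => e _; rewrite !mxE !enum_rankK /av; congr (_ * _).
  ring.
have Y := Mg_k_free Hy.
have Hc : forall u, mu u = mu v0.
  move=> u; apply/eqP; rewrite -subr_eq0.
  have := congr1 (fun z : 'rV[k]_n => z 0 (rk u)) Y; rewrite /= !mxE enum_rankK => ->.
  by [].
by move=> u w; rewrite !Hc.
Qed.

End Lap.

End P6.
Import P6.

Module P7.
Import GRing.Theory.
Local Open Scope ring_scope.

Section Span.
Variables (V E : finType) (t h : E -> V) (k : fieldType) (sigma : {perm (E * bool)}).
Hypothesis Hk : [pchar k] =i pred0.
Hypothesis Hconn : quiver_connected t h.
Hypothesis Hrot : rotation_system t h sigma.
Variable f0 : {set E * bool}.
Hypothesis Hf0 : f0 \in faces sigma.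
Local Notation BP := (BPidx sigma f0).
Local Notation chi := (@chiG E k).

Lemma core (mu : V -> k) (c : BP -> k) :
  (forall r, mu (t r) - mu (h r) + \sum_f c f * chi (val f) r = 0) ->
  (forall f, c f = 0) /\ (forall u w, mu u = mu w).
Proof.
move=> H.
have Hd : forall u, \sum_r (mu (t r) - mu (h r)) * ((t r == u)%:R - (h r == u)%:R) = 0.
  move=> u.
  have -> : \sum_r (mu (t r) - mu (h r)) * ((t r == u)%:R - (h r == u)%:R) =
     - \sum_r \sum_f c f * (chi (val f) r * ((t r == u)%:R - (h r == u)%:R)).
    rewrite -sumrN; apply: eq_bigr => r _.
    have -> : mu (t r) - mu (h r) = - \sum_f c f * chi (val f) r.
      by apply/eqP; rewrite -addr_eq0 H.
    by rewrite mulNr mulr_suml; congr (- _); apply: eq_bigr => f _; rewrite mulrA.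
  rewrite exchange_big /= big1 ?oppr0 // => f _; rewrite -mulr_sumr (face_cycle k Hrot) ?mulr0 //.
  by have /andP [] := valP f.
have Hc : forall u w, mu u = mu w by move=> u w; exact: (lap_const u Hconn Hk Hd).
split => //; apply: (dual_zero Hrot Hconn Hf0) => r.
by have := H r; rewrite (Hc (t r) (h r)) subrr add0r.
Qed.

Lemma sum_enum_val (T : finType) (G : T -> k) : \sum_(i < #|T|) G (enum_val i) = \sum_x G x.
Proof.
rewrite [RHS](reindex (@enum_val T xpredT)) //; apply: onW_bij.
by exists (@enum_rank T); [exact: enum_valK | exact: enum_rankK].
Qed.

Local Notation nV := #|V|.
Local Notation nB := #|{: BP}|.
Local Notation nE := #|E|.
Definition Mv : 'M[k]_(nV, nE) :=
  \matrix_(i, j) ((t (enum_val j) == enum_val i)%:R - (h (enum_val j) == enum_val i)%:R).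
Definition Mf : 'M[k]_(nB, nE) := \matrix_(i, j) chi (val (enum_val i)) (enum_val j).
Definition Mt : 'M[k]_(nV + nB, nE) := col_mx Mv Mf.

Lemma sum_rk' (y : 'I_nV -> k) x : \sum_i y i * (x == enum_val i)%:R = y (enum_rank x).
Proof.
rewrite (bigD1 (enum_rank x)) //= enum_rankK eqxx mulr1 big1 ?addr0 // => i ni.
case: eqP; rewrite ?mulr0 // => e; move: ni; by rewrite e enum_valK eqxx.
Qed.

Lemma Mt_row (x : 'rV[k]_(nV + nB)) j :
  (x *m Mt) 0 j = lsubmx x 0 (enum_rank (t (enum_val j))) - lsubmx x 0 (enum_rank (h (enum_val j)))
    + \sum_(f : BP) rsubmx x 0 (enum_rank f) * chi (val f) (enum_val j).
Proof.
rewrite -{1}(hsubmxK x) /Mt mul_row_col mxE !mxE; congr (_ + _).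
  under eq_bigr do rewrite !mxE mulrBr; by rewrite sumrB (sum_rk' (fun i => x 0 (lshift _ i))) (sum_rk' (fun i => x 0 (lshift _ i))).
rewrite -[RHS](sum_enum_val (fun f : BP => rsubmx x 0 (enum_rank f) * chi (val f) (enum_val j))).
apply: eq_bigr => i _; by rewrite !mxE enum_valK.
Qed.

Variable e0 : E.
Hypothesis Heuler : (#|V| + #|faces sigma| = #|E| + 2)%N.

Lemma card_BP : nB = (#|faces sigma| - 1)%N.
Proof.
rewrite card_sig (cardsD1 f0 (faces sigma)) Hf0 add1n subn1 /=.
by apply: eq_card => f; rewrite !inE andbC.
Qed.

Lemma ker_small : (\rank (kermx Mt) <= 1)%N.
Proof.
pose w0 : 'rV[k]_(nV + nB) := row_mx (const_mx 1) 0.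
apply: leq_trans (rank_leq_row w0); apply: mxrankS; apply/row_subP => i.
set y := row i (kermx Mt).
have Hy : y *m Mt = 0 by rewrite /y -row_mul mulmx_ker row0.
clearbody y.
have Hcond : forall r, (fun v => lsubmx y 0 (enum_rank v)) (t r) - (fun v => lsubmx y 0 (enum_rank v)) (h r)
   + \sum_f (fun f => rsubmx y 0 (enum_rank f)) f * chi (val f) r = 0.
  move=> r; have := congr1 (fun z : 'rV[k]_nE => z 0 (enum_rank r)) Hy; rewrite /= Mt_row !enum_rankK => E1.
  by apply: etrans E1 _; rewrite mxE.
have [Hc Hm] := @core (fun v => lsubmx y 0 (enum_rank v)) (fun f => rsubmx y 0 (enum_rank f)) Hcond.
have -> : y = lsubmx y 0 (enum_rank (t e0)) *: w0.
  rewrite -{1}(hsubmxK y) /w0 scale_row_mx scaler0; congr row_mx; apply/rowP => j.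
    rewrite [RHS]mxE [X in _ * X]mxE mulr1.
    by have := Hm (enum_val j) (t e0); rewrite /= enum_valK.
  rewrite [RHS]mxE; have := Hc (enum_val j); by rewrite /= enum_valK.
exact: scalemx_sub.
Qed.

Lemma Mt_full : row_full Mt.
Proof.
rewrite /row_full eqn_leq rank_leq_col /=.
have := ker_small; rewrite mxrank_ker => H1.
have H2 := card_BP.
have H3 : (0 < #|faces sigma|)%N by apply/card_gt0P; exists f0.
move: H1 H2 H3 Heuler; set a := #|faces sigma|; set b := #|V|; set c := #|E|; set d := \rank Mt.
set m := #|{: BP}|; lia.
Qed.

Lemma spanG (lam : E -> k) : exists mu : V -> k, exists cf : BP -> k,
  forall r, lam r = mu (t r) - mu (h r) + \sum_f cf f * chi (val f) r.
Proof.
pose l : 'rV[k]_nE := \row_j lam (enum_val j).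
have /submxP [x Hx] : (l <= Mt)%MS by apply: submx_full; exact: Mt_full.
exists (fun v => lsubmx x 0 (enum_rank v)), (fun f => rsubmx x 0 (enum_rank f)) => r.
have := congr1 (fun z : 'rV[k]_nE => z 0 (enum_rank r)) Hx; rewrite /= Mt_row mxE !enum_rankK => ->.
by [].
Qed.

End Span.

End P7.
Import P7.


Theorem theorem4p7 (V E : finType) (t h : E -> V) (k : fieldType)
    (G : pred (seq E)) (sigma : {perm (E * bool)}) (f0 : {set E * bool}) :
  [pchar k]%R =i pred0 ->
  quiver_connected t h ->
  planar_embedding t h sigma ->
  (#|E| = 0%N \/ f0 \in faces sigma) ->
  gens_ok t h G -> complete t h G -> acyclic t h G ->
  hh1_basis (@hh1_family V E t h G k sigma f0).
Proof.
move=> Hk Hconn [Hrot Heul] Hf0 Hg Hc Hac.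
have E0 : #|E| = 0%N -> forall r : E, False.
  by move=> e r; move: (card0_eq e r); rewrite !inE.
have HK : forall (mu : V -> k) (c : BPidx sigma f0 -> k),
  (forall r, (mu (t r) - mu (h r) + \sum_f c f * chi k (val f) r = 0)%R) -> forall f, c f = 0%R.
  move=> mu c H f; case: Hf0 => [e|Hf]; last first.
    by have [] := core Hk Hconn Hrot Hf H.
  have := valP f; case/andP => /imsetP [d _ _] _; case: (E0 e d.1).
have HS : forall lam : E -> k, exists mu : V -> k, exists cf : BPidx sigma f0 -> k,
  forall r, lam r = (mu (t r) - mu (h r) + \sum_f cf f * chi k (val f) r)%R.
  move=> lam; case: Hf0 => [e|Hf].
    by exists (fun=> 0%R), (fun=> 0%R) => r; case: (E0 e r).
  case: (posnP #|E|) => [e|pos]; first by exists (fun=> 0%R), (fun=> 0%R) => r; case: (E0 e r).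
  have [e0 _] : {e0 : E | true} by move/card_gt0P: pos => /sigW [e0 _]; exists e0.
  exact: (spanG Hk Hconn Hrot Hf e0 (Heul pos)).
split; first exact: fam_der.
split; first exact: (indep Hg Hac HK).
exact: (spanning Hg Hc Hac HS).
Qed.
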